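(* Let $G$ and $H$ be finite groups, and identify the vertex set $G\times H$ of graphs on the direct product with the vertex set of the strong product. Then: (a) $\mathrm{Com}(G\times H)=\mathrm{Com}(G)\boxtimes\mathrm{Com}(H)$. (b) If $|G|$ and $|H|$ are coprime, then $\mathrm{EPow}(G\times H)=\mathrm{EPow}(G)\boxtimes\mathrm{EPow}(H)$. (c) If $|G/G'|$ and $|H/H'|$ are coprime (in particular if $G$ and $H$ are perfect), then $\mathrm{DCom}(G\times H)=\mathrm{DCom}(G)\boxtimes\mathrm{DCom}(H)$.
   Context: $G'$ denotes the derived subgroup. For graphs $\Gamma,\Delta$ with vertex sets $V,W$, the strong product $\Gamma\boxtimes\Delta$ has vertex set $V\times W$, with $(v_1,w_1)\ne(v_2,w_2)$ adjacent iff $v_1$ is equal or adjacent to $v_2$ and $w_1$ is equal or adjacent to $w_2$. For a group $K$, graphs have vertex set $K$ and no loops: $\mathrm{Com}(K)$: distinct $x,y$ adjacent iff $xy=yx$; $\mathrm{EPow}(K)$: adjacent iff $\langle x,y\rangle$ is cyclic; $\mathrm{DCom}(K)$: adjacent iff for every group $L$ with central subgroup $Z$ and $L/Z\cong K$, any preimages of $x,y$ in $L$ commute. *)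

(* Defs.v *)
From HB Require Import structures.
From mathcomp Require Import all_boot all_fingroup all_solvable.
Set Implicit Arguments. Unset Strict Implicit. Unset Printing Implicit Defensive.
Import GroupScope.
Local Open Scope group_scope.

(* Simple graphs on a vertex type, as (irreflexive, symmetric) Prop relations. *)
Definition graph (V : Type) := V -> V -> Prop.

Definition strong_prod (V W : Type) (Gam : graph V) (Del : graph W) : graph (V * W) :=
  fun p q => p <> q /\ (p.1 = q.1 \/ Gam p.1 q.1) /\ (p.2 = q.2 \/ Del p.2 q.2).

Definition Com (K : finGroupType) : graph K :=
  fun x y => x <> y /\ commute x y.

Definition EPow (K : finGroupType) : graph K :=
  fun x y => x <> y /\ cyclic <<[set x; y]>>.

Definition DCom (K : finGroupType) : graph K :=
  fun x y => x <> y /\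
    forall (L : finGroupType) (Z : {group L}),
      Z \subset 'Z([set: L]) ->
      forall f : {morphism ([set: L] / Z) >-> K},
        isom ([set: L] / Z) [set: K] f ->
        forall a b : L, f (coset Z a) = x -> f (coset Z b) = y -> commute a b.

(* Main.v *)
Require Import Defs.
From HB Require Import structures.
From mathcomp Require Import all_boot all_fingroup all_solvable.
Import GroupScope.
Local Open Scope group_scope.

Lemma pair_commute (G H : finGroupType) (u v : G * H) :
  commute u v <-> commute u.1 v.1 /\ commute u.2 v.2.
Proof.
case: u v => [a b] [c d]; split.
  by move=> e; split; [exact: (congr1 fst e) | exact: (congr1 snd e)].
by case=> /= e1 e2; rewrite /commute; congr pair.
Qed.

Lemma partA (G H : finGroupType) (u v : G * H) : Com u v <-> strong_prod (@Com G) (@Com H) u v.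
Proof.
rewrite /Com /strong_prod; split.
  case=> ne /pair_commute [c1 c2]; split=> //; split.
    by case: (eqVneq u.1 v.1) => [->|n]; [left|right; split=> //; apply/eqP].
  by case: (eqVneq u.2 v.2) => [->|n]; [left|right; split=> //; apply/eqP].
case=> ne [[e1|[_ c1]] [e2|[_ c2]]]; split=> //; apply/pair_commute; split=> //; rewrite ?e1 ?e2 //.
Qed.


Lemma cyc2_eq (G : finGroupType) (g : G) : cyclic <<[set g; g]>>.
Proof. by rewrite setUid cycle_cyclic. Qed.

Lemma fst_gen2 (G H : finGroupType) (u v : G * H) :
  [morphism of @fst G H] @* <<[set u; v]>> = <<[set u.1; v.1]>>.
Proof. by rewrite morphim_gen ?subsetT // morphimU !morphim_set1 ?inE. Qed.

Lemma snd_gen2 (G H : finGroupType) (u v : G * H) :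
  [morphism of @snd G H] @* <<[set u; v]>> = <<[set u.2; v.2]>>.
Proof. by rewrite morphim_gen ?subsetT // morphimU !morphim_set1 ?inE. Qed.

Lemma cyclic_setX (G H : finGroupType) (A : {group G}) (B : {group H}) :
  coprime #|G| #|H| -> cyclic A -> cyclic B -> cyclic (setX A B).
Proof.
move=> co cA cB.
have := setX_dprod A B => /dprodP [_ <- cen _].
apply: cyclicM => //.
- by rewrite -morphim_pairg1 morphim_cyclic.
- by rewrite -morphim_pair1g morphim_cyclic.
rewrite !cardsX !cards1 muln1 mul1n.
apply: (coprime_dvdl (cardSg (subsetT A))).
by apply: (coprime_dvdr (cardSg (subsetT B))); rewrite !cardsT.
Qed.

Lemma partB (G H : finGroupType) : coprime #|G| #|H| ->
  forall u v : G * H, EPow u v <-> strong_prod (@EPow G) (@EPow H) u v.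
Proof.
move=> co u v; rewrite /EPow /strong_prod; split.
  case=> ne cy; split=> //; split.
    case: (eqVneq u.1 v.1) => [->|n]; [by left|right; split; first exact/eqP].
    by have := morphim_cyclic [morphism of @fst G H] cy; rewrite fst_gen2.
  case: (eqVneq u.2 v.2) => [->|n]; [by left|right; split; first exact/eqP].
  by have := morphim_cyclic [morphism of @snd G H] cy; rewrite snd_gen2.
case=> ne [c1 c2]; split=> //.
have cA : cyclic <<[set u.1; v.1]>>.
  by case: c1 => [->|[]//]; exact: cyc2_eq.
have cB : cyclic <<[set u.2; v.2]>>.
  by case: c2 => [->|[]//]; exact: cyc2_eq.
have cX := @cyclic_setX _ _ [group of <<[set u.1; v.1]>>] [group of <<[set u.2; v.2]>>] co cA cB.
apply: cyclicS cX.
rewrite gen_subG; apply/subsetP => w; rewrite !inE => /orP[] /eqP ->;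
  by apply/andP; split; apply: mem_gen; rewrite !inE eqxx ?orbT.
Qed.


Section Use.
Variables (K L : finGroupType) (M : {group L}) (phi : {morphism M >-> K}).
Hypothesis kerC : 'ker phi \subset 'C(M).
Hypothesis imT : phi @* M = setT.

Let S := subg_of M.
Definition psif (u : S) : K := phi (sgval u).
Lemma psiM : {in [set: S] &, {morph psif : u v / u * v}}.
Proof. by move=> u v _ _; rewrite /psif -morphM ?subgP. Qed.
Definition psi : {morphism [set: S] >-> K} := Morphism psiM.

Lemma DCom_use x y a b : DCom x y -> a \in M -> b \in M -> phi a = x -> phi b = y ->
  commute a b.
Proof.
case=> _ D Ma Mb pa pb.
have skk : 'ker (coset ('ker psi)) \subset 'ker psi by rewrite ker_coset.
have nkG := ker_norm psi.
pose f := factm_morphism skk nkG.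
have cen : 'ker psi \subset 'Z([set: S]).
  apply/subsetP => u ku; apply/centerP; split; first exact: in_setT.
  move=> v _; apply: subg_inj; rewrite /commute /=.
  have : sgval u \in 'ker phi.
    by apply/(kerP _ (subgP u)); exact: (mker ku).
  move/(subsetP kerC)/centP; apply; exact: subgP.
have isof : isom ([set: S] / 'ker psi) [set: K] f.
  apply/isomP; split.
    by apply/injm_factmP; rewrite ker_coset.
  rewrite morphim_factm; apply/eqP; rewrite eqEsubset subsetT /=.
  apply/subsetP => k _; have : k \in phi @* M by rewrite imT.
  case/morphimP => m Mm _ ->; apply/morphimP; exists (subg M m) => //.
  by rewrite /= /psif subgK.
have := D S ('ker psi)%G cen f isof (subg M a) (subg M b).
have fE : forall s, f (coset ('ker psi) s) = psi s.
  by move=> s; exact: (factmE skk nkG (in_setT s)).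
rewrite !fE /= /psif !subgK // => /(_ pa pb) c.
by have := congr1 sgval c; rewrite !sgvalM ?inE // !subgK.
Qed.
End Use.


Lemma comm_pow (L K : finGroupType) (A B : {group L}) (psi : {morphism A >-> K}) (n : nat) a b :
 (forall a b, a \in A -> b \in B -> [~ a, b] \in 'Z([set: L])) ->
 'ker psi \subset 'Z([set: L]) ->
 (forall k, k \in psi @* A -> k ^+ n \in (psi @* A)^`(1)) ->
 a \in A -> b \in B -> [~ a, b] ^+ n = 1.
Proof.
move=> cc kc pw Aa Bb.
have thM : {in A &, {morph (fun w => [~ w, b]) : x y / x * y}}.
  move=> x y Ax Ay /=; rewrite commMgJ.
  have /centerP [_ cz] := cc x b Ax Bb.
  have e : [~ x, b] ^ y = [~ x, b] by apply/conjg_fixP/commgP; exact: cz.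
  by rewrite e.
pose th : {morphism A >-> L} := Morphism thM.
have ab : abelian (th @* A).
  apply: (abelianS _ (center_abelian [set: L])).
  by apply/subsetP => c /morphimP [w Aw _ ->]; exact: cc.
have d1 : (th @* A)^`(1) = 1 by apply/derG1P.
have : (psi a) ^+ n \in (psi @* A)^`(1) by apply: pw; exact: mem_morphim.
rewrite -morphim_der // -morphX // => /morphimP [w Aw A'w e].
have Aan : a ^+ n \in A by rewrite groupX.
pose z := w^-1 * a ^+ n.
have Az : z \in A by rewrite groupM ?groupV.
have kz : z \in 'ker psi.
  by apply/(kerP _ Az); rewrite morphM ?groupV // morphV // e mulVg.
have ez : a ^+ n = w * z by rewrite /z mulKVg.
have thz : th z = 1.
  have /centerP [_ cz] := subsetP kc z kz.
  by apply/eqP/commgP; exact: cz.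
have thw : th w = 1.
  have : th w \in th @* A^`(1) by exact: mem_morphim.
  by rewrite morphim_der ?d1 // => /set1P.
have : th (a ^+ n) = [~ a, b] ^+ n by rewrite morphX.
by rewrite ez morphM // thz thw mulg1 => <-.
Qed.


Section Ext.
Variables (K L : finGroupType) (Z : {group L}) (f : {morphism [set: L] / Z >-> K}).
Hypotheses (Zc : Z \subset 'Z([set: L])) (isof : isom ([set: L] / Z) [set: K] f).

Lemma NZ l : l \in 'N(Z).
Proof. exact: (subsetP (normal_norm (sub_center_normal Zc))). Qed.

Definition phi0f (l : L) : K := f (coset Z l).
Lemma phi0M : {in [set: L] &, {morph phi0f : u v / u * v}}.
Proof.
move=> u v _ _; rewrite /phi0f morphM ?NZ // morphM //; exact: mem_quotient.
Qed.
Definition phi0 : {morphism [set: L] >-> K} := Morphism phi0M.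

Lemma phi0_1 l : (phi0 l = 1) <-> (l \in Z).
Proof.
case/isomP: isof => /injmP inj _; split.
  move=> e; apply: coset_idr; first exact: NZ.
  apply: inj; rewrite ?group1 ?morph1 //; exact: mem_quotient.
by move=> Zl; rewrite /= /phi0f coset_id // morph1.
Qed.

Lemma phi0_surj k : exists l, phi0 l = k.
Proof.
case/isomP: isof => _ im.
have : k \in f @* ([set: L] / Z) by rewrite im inE.
case/morphimP => q _ /morphimP [l _ _ ->] ->; by exists l.
Qed.

Lemma Z_cent l A : l \in Z -> l \in 'C(A).
Proof.
move/(subsetP Zc)/centerP => [_ c]; apply/centP => v _; exact: c.
Qed.

Lemma phi0_commute u v : phi0 u = phi0 v -> commute u v.
Proof.
move=> e.
have z1 : phi0 (u^-1 * v) = 1 by rewrite morphM ?inE // morphV ?inE // e mulVg.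
have /phi0_1 Zz := z1.
have -> : v = u * (u^-1 * v) by rewrite mulKVg.
apply: commuteM; first exact: commute_refl.
apply: commute_sym; have := @Z_cent _ [set: L] Zz => /centP; by apply; rewrite inE.
Qed.
End Ext.


Lemma DCom_projG (G H : finGroupType) (p q : G * H) :
  DCom p q -> p.1 <> q.1 -> DCom p.1 q.1.
Proof.
move=> Dpq ne; split=> // L Z Zc f isof a b fa fb.
pose phPf := fun w : L * H => (@phi0 _ _ Z f Zc w.1, w.2).
have phPM : {in [set: L * H] &, {morph phPf : x y / x * y}}.
  move=> [x1 x2] [y1 y2] _ _; rewrite /phPf /=.
  by have := @morphM _ _ _ (@phi0 _ _ Z f Zc) x1 y1 (in_setT _) (in_setT _) => /= ->.
pose phP : {morphism [set: L * H] >-> G * H} := Morphism phPM.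
have c : commute (a, p.2) (b, q.2).
  apply: (@DCom_use _ _ [set: L * H]%G phP _ _ p q) => //.
  - apply/subsetP => w kw; have := mker kw; rewrite /= /phPf.
    case=> e1 e2; have Zw : w.1 \in Z by apply/(@phi0_1 _ _ _ _ Zc isof).
    apply/centP => v _; apply/pair_commute; split.
      by have := @Z_cent _ _ Zc _ [set: L] Zw => /centP; apply; rewrite inE.
    by rewrite e2; exact: commute_sym (commute1 _).
  - apply/eqP; rewrite eqEsubset subsetT /=; apply/subsetP => k _.
    have [l e] := @phi0_surj _ _ _ _ Zc isof k.1.
    apply/morphimP; exists (l, k.2); rewrite ?inE //.
    by rewrite /= /phPf; move: e => /= ->; case: (k).
  - by rewrite /= /phPf /= /phi0f fa; case: (p).
  - by rewrite /= /phPf /= /phi0f fb; case: (q).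
by case/pair_commute: c.
Qed.

Lemma DCom_projH (G H : finGroupType) (p q : G * H) :
  DCom p q -> p.2 <> q.2 -> DCom p.2 q.2.
Proof.
move=> Dpq ne; split=> // L Z Zc f isof a b fa fb.
pose phPf := fun w : G * L => (w.1, @phi0 _ _ Z f Zc w.2).
have phPM : {in [set: G * L] &, {morph phPf : x y / x * y}}.
  move=> [x1 x2] [y1 y2] _ _; rewrite /phPf /=.
  by have := @morphM _ _ _ (@phi0 _ _ Z f Zc) x2 y2 (in_setT _) (in_setT _) => /= ->.
pose phP : {morphism [set: G * L] >-> G * H} := Morphism phPM.
have c : commute (p.1, a) (q.1, b).
  apply: (@DCom_use _ _ [set: G * L]%G phP _ _ p q) => //.
  - apply/subsetP => w kw; have := mker kw; rewrite /= /phPf.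
    case=> e2 e1; have Zw : w.2 \in Z by apply/(@phi0_1 _ _ _ _ Zc isof).
    apply/centP => v _; apply/pair_commute; split.
      by rewrite e2; exact: commute_sym (commute1 _).
    by have := @Z_cent _ _ Zc _ [set: L] Zw => /centP; apply; rewrite inE.
  - apply/eqP; rewrite eqEsubset subsetT /=; apply/subsetP => k _.
    have [l e] := @phi0_surj _ _ _ _ Zc isof k.2.
    apply/morphimP; exists (k.1, l); rewrite ?inE //.
    by rewrite /= /phPf; move: e => /= ->; case: (k).
  - by rewrite /= /phPf /= /phi0f fa; case: (p).
  - by rewrite /= /phPf /= /phi0f fb; case: (q).
by case/pair_commute: c.
Qed.


Lemma powder (G : finGroupType) (k : G) :
  k ^+ #|[set: G] / [set: G]^`(1)| \in [set: G]^`(1).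
Proof.
have Nk : k \in 'N([set: G]^`(1)) by apply: (subsetP (der_norm 1 [set: G]%G)); rewrite inE.
apply: coset_idr; first by rewrite groupX.
rewrite morphX //; apply: expg_cardG; apply: mem_quotient; by rewrite inE.
Qed.

Lemma DCom_back (G H : finGroupType) (p q : G * H) :
  coprime #|[set: G] / ([set: G])^`(1)| #|[set: H] / ([set: H])^`(1)| ->
  p <> q -> (p.1 = q.1 \/ DCom p.1 q.1) -> (p.2 = q.2 \/ DCom p.2 q.2) -> DCom p q.
Proof.
move=> co ne c1 c2; split=> // L Z Zc f isof a b fa fb.
pose P0 := @phi0 _ _ Z f Zc.
have P0M : forall x y, P0 (x * y) = P0 x * P0 y.
  by move=> x y; exact: (morphM P0 (in_setT x) (in_setT y)).
have P0V : forall x, P0 x^-1 = (P0 x)^-1.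
  by move=> x; exact: (morphV P0 (in_setT x)).
pose p1f := fun l => (P0 l).1.
have p1M : {in [set: L] &, {morph p1f : x y / x * y}} by move=> x y _ _; rewrite /p1f P0M.
pose P1 : {morphism [set: L] >-> G} := Morphism p1M.
pose p2f := fun l => (P0 l).2.
have p2M : {in [set: L] &, {morph p2f : x y / x * y}} by move=> x y _ _; rewrite /p2f P0M.
pose P2 : {morphism [set: L] >-> H} := Morphism p2M.
pose M1 := ('ker P2)%G.
pose M2 := ('ker P1)%G.
have inM1 : forall l, l \in M1 <-> (P0 l).2 = 1.
  by move=> l; split; [move/(kerP _ (in_setT l)) | move=> h; apply/(kerP _ (in_setT l))].
have inM2 : forall l, l \in M2 <-> (P0 l).1 = 1.
  by move=> l; split; [move/(kerP _ (in_setT l)) | move=> h; apply/(kerP _ (in_setT l))].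
have Z0 : forall l, P0 l = 1 -> l \in Z.
  by move=> l; exact: (proj1 (@phi0_1 _ _ _ _ Zc isof l)).
have surj := @phi0_surj _ _ _ _ Zc isof.
have pairE : forall k : G * H, k.1 = 1 -> k.2 = 1 -> k = 1.
  by case=> x y /= -> ->.
pose psi1 := [morphism of restrm (subsetT M1) P1].
pose psi2 := [morphism of restrm (subsetT M2) P2].
have ZC : forall A : {set L}, 'Z([set: L]) \subset 'C(A).
  by move=> A; apply: subset_trans (subsetIr _ _) (centS (subsetT _)).
have kpsi1 : 'ker psi1 \subset 'Z([set: L]).
  rewrite ker_restrm; apply/subsetP => l /setIP [m1 k1]; apply: (subsetP Zc).
  by apply: Z0; apply: pairE; [exact: (mker k1) | exact/inM1].
have kpsi2 : 'ker psi2 \subset 'Z([set: L]).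
  rewrite ker_restrm; apply/subsetP => l /setIP [m1 k1]; apply: (subsetP Zc).
  by apply: Z0; apply: pairE; [exact/inM2 | exact: (mker k1)].
have impsi1 : psi1 @* M1 = setT.
  rewrite morphim_restrm setIid; apply/eqP; rewrite eqEsubset subsetT /=.
  apply/subsetP => g _; have [l e] := surj (g, 1).
  apply/morphimP; exists l; first by rewrite inE.
    by apply/inM1; rewrite e.
  by rewrite /= /p1f e.
have impsi2 : psi2 @* M2 = setT.
  rewrite morphim_restrm setIid; apply/eqP; rewrite eqEsubset subsetT /=.
  apply/subsetP => g _; have [l e] := surj (1, g).
  apply/morphimP; exists l; first by rewrite inE.
    by apply/inM2; rewrite e.
  by rewrite /= /p2f e.
have ccZ : forall u v, u \in M1 -> v \in M2 -> [~ u, v] \in 'Z([set: L]).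
  move=> u v /inM1 u2 /inM2 v1; apply: (subsetP Zc); apply: Z0.
  rewrite (morphR P0 (in_setT u) (in_setT v)); apply/eqP/commgP.
  apply/pair_commute; split; first by rewrite v1; exact: commute1.
  by rewrite u2; exact: commute_sym (commute1 _).
have ccZ' : forall u v, u \in M2 -> v \in M1 -> [~ u, v] \in 'Z([set: L]).
  by move=> u v Mu Mv; rewrite -invg_comm groupV; exact: ccZ.
have comm12 : forall u v, u \in M1 -> v \in M2 -> commute u v.
  move=> u v Mu Mv.
  have e1 := @comm_pow _ _ M1 M2 psi1 #|[set: G] / [set: G]^`(1)| u v ccZ kpsi1
    (fun k _ => ltac:(rewrite impsi1; exact: powder)) Mu Mv.
  have e2 := @comm_pow _ _ M2 M1 psi2 #|[set: H] / [set: H]^`(1)| v u ccZ' kpsi2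
    (fun k _ => ltac:(rewrite impsi2; exact: powder)) Mv Mu.
  move: e2; rewrite -invg_comm expVgn => /eqP; rewrite invg_eq1 => /eqP e2.
  have : #[[~ u, v]] %| gcdn #|[set: G] / [set: G]^`(1)| #|[set: H] / [set: H]^`(1)|.
    by rewrite dvdn_gcd !order_dvdn e1 e2 eqxx.
  by rewrite (eqP co) dvdn1 order_eq1 => /commgP.
have Pa : P0 a = p := fa.
have Pb : P0 b = q := fb.
have [a1 ea1] := surj (p.1, 1).
have [b1 eb1] := surj (q.1, 1).
pose a2 := a1^-1 * a.
pose b2 := b1^-1 * b.
have ea2 : P0 a2 = (1, p.2).
  by rewrite P0M P0V ea1 Pa; case: (p) => x y /=; congr pair; rewrite /= ?mulVg ?invg1 ?mul1g.
have eb2 : P0 b2 = (1, q.2).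
  by rewrite P0M P0V eb1 Pb; case: (q) => x y /=; congr pair; rewrite /= ?mulVg ?invg1 ?mul1g.
have Ma1 : a1 \in M1 by apply/inM1; rewrite ea1.
have Mb1 : b1 \in M1 by apply/inM1; rewrite eb1.
have Ma2 : a2 \in M2 by apply/inM2; rewrite ea2.
have Mb2 : b2 \in M2 by apply/inM2; rewrite eb2.
have c11 : commute a1 b1.
  case: c1 => [e | Dc].
    apply: (@phi0_commute _ _ _ _ Zc isof).
    by apply: (etrans ea1); rewrite e; exact: (esym eb1).
  apply: (@DCom_use _ _ M1 psi1 (subset_trans kpsi1 (ZC _)) impsi1 _ _ _ _ Dc Ma1 Mb1).
    exact: (congr1 fst ea1).
  exact: (congr1 fst eb1).
have c22 : commute a2 b2.
  case: c2 => [e | Dc].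
    apply: (@phi0_commute _ _ _ _ Zc isof).
    by apply: (etrans ea2); rewrite e; exact: (esym eb2).
  apply: (@DCom_use _ _ M2 psi2 (subset_trans kpsi2 (ZC _)) impsi2 _ _ _ _ Dc Ma2 Mb2).
    exact: (congr1 snd ea2).
  exact: (congr1 snd eb2).
have -> : a = a1 * a2 by rewrite /a2 mulKVg.
have -> : b = b1 * b2 by rewrite /b2 mulKVg.
have h1 : commute (a1 * a2) b1.
  exact: commute_sym (commuteM (commute_sym c11) (comm12 b1 a2 Mb1 Ma2)).
have h2 : commute (a1 * a2) b2.
  exact: commute_sym (commuteM (commute_sym (comm12 a1 b2 Ma1 Mb2)) (commute_sym c22)).
exact: commuteM h1 h2.
Qed.


Theorem mainTheorem14 (G H : finGroupType) :
  (forall u v : G * H, Com u v <-> strong_prod (@Com G) (@Com H) u v) /\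
  (coprime #|G| #|H| ->
     forall u v : G * H, EPow u v <-> strong_prod (@EPow G) (@EPow H) u v) /\
  (coprime #|[set: G] / ([set: G])^`(1)| #|[set: H] / ([set: H])^`(1)| ->
     forall u v : G * H, DCom u v <-> strong_prod (@DCom G) (@DCom H) u v).
Proof.
split; first exact: partA.
split; first exact: partB.
move=> co u v; split.
  move=> Duv; split; first by case: Duv.
  split.
    by case: (eqVneq u.1 v.1) => [->|n]; [left | right; apply: DCom_projG => //; exact/eqP].
  by case: (eqVneq u.2 v.2) => [->|n]; [left | right; apply: DCom_projH => //; exact/eqP].
case=> ne [c1 c2]; exact: DCom_back.
Qed.
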